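(* For all $k\in\mathbb N$ the following hold in the $q$-shuffle algebra $\mathbb V$: $$[W_0,W_{k+1}]=[W_{-k},W_1]=(1-q^{-2})(\tilde G_{k+1}-G_{k+1}),$$ $$[W_0,G_{k+1}]_q=[\tilde G_{k+1},W_0]_q=(q-q^{-1})W_{-k-1},$$ $$[G_{k+1},W_1]_q=[W_1,\tilde G_{k+1}]_q=(q-q^{-1})W_{k+2}.$$
   Context: Let $\mathbb F$ be a field and let $q\in\mathbb F$ be nonzero and not a root of unity. Let $\mathbb V$ be the free associative $\mathbb F$-algebra on noncommuting $x,y$, with basis the words (including $1$). Juxtaposition denotes concatenation. Set $\langle x,x\rangle=\langle y,y\rangle=2$ and $\langle x,y\rangle=\langle y,x\rangle=-2$. The $q$-shuffle product $\star$ is the bilinear product determined as follows: - $1\star v=v\star 1=v$; - for nontrivial words $u=u_1\cdots u_r$ and $v=v_1\cdots v_s$, $$u\star v=u_1((u_2\cdots u_r)\star v)+v_1(u\star(v_2\cdots v_s))q^{\langle u_1,v_1\rangle+\cdots+\langle u_r,v_1\rangle}.$$ This makes $\mathbb V$ an associative algebra, the $q$-shuffle algebra. Write $[a,b]=a\star b-b\star a$ and $[a,b]_q=q\,a\star b-q^{-1}b\star a$. For $k\in\mathbb N$: - $W_{-k}=xyx\cdots x$ is the alternating word of length $2k+1$ beginning and ending with $x$; - $W_{k+1}=yxy\cdots y$ is the alternating word of length $2k+1$ beginning and ending with $y$; - $G_k=yxyx\cdots yx$ is the word of length $2k$; - $\tilde G_k=xyxy\cdots xy$ is the word of length $2k$;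 - $G_0=\tilde G_0=1$. *)

(* Defs.v *)
From HB Require Import structures.
From mathcomp Require Import all_boot all_order all_algebra.
From mathcomp Require Import finmap.
From mathcomp.multinomials Require Import monalg.
Set Implicit Arguments. Unset Strict Implicit. Unset Printing Implicit Defensive.
Import GRing.Theory.
Local Open Scope ring_scope.

(* Letters: true = x, false = y.  Words = seq bool (the empty word is 1). *)
Notation word := (seq bool).
Definition lx : bool := true.
Definition ly : bool := false.

(* The free associative algebra V on x, y, as a vector space: the free
   F-vector space with basis the words (finitely supported coefficients). *)
Definition V (F : fieldType) := {malg F[word]}.

Section QShuffle.
Variables (F : fieldType) (q : F).

Definition bform (a b : bool) : int := if a == b then 2 else -2.

Definition lcons (a : bool) (p : V F) : V F :=
  \sum_(w <- msupp p) << p@_w *g (a :: w) >>.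

Fixpoint wshuffle (u v : word) {struct u} : V F :=
  match u with
  | [::] => << v >>
  | a :: u' =>
      let fix sh2 (v : word) : V F :=
        match v with
        | [::] => << u >>
        | b :: v' =>
            lcons a (wshuffle u' v) +
            q ^ (\sum_(c <- u) bform c b) *: lcons b (sh2 v')
        end
      in sh2 v
  end.

Definition qstar (p r : V F) : V F :=
  \sum_(w1 <- msupp p) \sum_(w2 <- msupp r) (p@_w1 * r@_w2) *: wshuffle w1 w2.

Definition qcomm (p r : V F) : V F := qstar p r - qstar r p.
Definition qqcomm (p r : V F) : V F := q *: qstar p r - q^-1 *: qstar r p.

End QShuffle.

(* W_{-k} = x y x ... x, length 2k+1 *)
Definition Wneg_w (k : nat) : word := mkseq (fun i => ~~ odd i) k.*2.+1.
(* W_{k+1} = y x y ... y, length 2k+1 *)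
Definition Wpos_w (k : nat) : word := mkseq (fun i => odd i) k.*2.+1.
(* G_k = y x y x ... y x, length 2k *)
Definition G_w (k : nat) : word := mkseq (fun i => odd i) k.*2.
(* tilde G_k = x y x y ... x y, length 2k *)
Definition Gt_w (k : nat) : word := mkseq (fun i => ~~ odd i) k.*2.

Definition Wneg (F : fieldType) (k : nat) : V F := << Wneg_w k >>.
Definition Wpos (F : fieldType) (k : nat) : V F := << Wpos_w k >>.  (* = W_{k+1} *)
Definition Gw (F : fieldType) (k : nat) : V F := << G_w k >>.
Definition Gtw (F : fieldType) (k : nat) : V F := << Gt_w k >>.

(* Main.v *)
Require Import Defs.
From HB Require Import structures.
From mathcomp Require Import all_boot all_order all_algebra.
From mathcomp Require Import finmap.
From mathcomp.multinomials Require Import monalg.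
From mathcomp Require Import ring.
Import GRing.Theory.
Local Open Scope ring_scope.

Ltac atomize := repeat (match goal with |- context [@mcoeff ?K ?G ?u ?p] => let X := fresh "X" in set X := @mcoeff K G u p end).

Section S.
Variables (F : fieldType) (q : F).

Lemma sum_eq1 (s : seq word) (G : word -> F) w0 : uniq s ->
  \sum_(w <- s) G w *+ (w == w0) = if w0 \in s then G w0 else 0.
Proof.
move=> us; case: ifP => Hin.
  rewrite (bigD1_seq w0) //= eqxx mulr1n big1 ?addr0 // => i /negbTE ->.
  by rewrite mulr0n.
rewrite big1_seq // => i /= Hi; case: eqP => // E.
by rewrite -E Hi in Hin.
Qed.

Lemma lconsE a (p : V F) u :
  (lcons a p)@_u = if u is c :: w then (c == a)%:R * p@_w else 0.
Proof.
rewrite /lcons raddf_sum.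
rewrite /=; under eq_bigr do rewrite mcoeffU.
case: u => [|c w].
  by rewrite big1.
rewrite eq_sym; case: eqP => [->|Hca].
  under eq_bigr do rewrite eqseq_cons eqxx /=.
  rewrite sum_eq1 ?fset_uniq // mul1r; case: ifP => // /negbT H.
  by rewrite mcoeff_outdom.
rewrite mul0r big1 // => i _.
by rewrite eqseq_cons; case: eqP => // E; rewrite E in Hca.
Qed.

Lemma lconsD a (p r : V F) : lcons a (p + r) = lcons a p + lcons a r.
Proof. by apply/malgP => u; rewrite mcoeffD !lconsE; case: u => [|c w]; rewrite ?mcoeffD ?mulrDr ?addr0. Qed.
Lemma lconsN a (p : V F) : lcons a (- p) = - lcons a p.
Proof. by apply/malgP => u; rewrite mcoeffN !lconsE; case: u => [|c w]; rewrite ?mcoeffN ?mulrN ?oppr0. Qed.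
Lemma lconsB a (p r : V F) : lcons a (p - r) = lcons a p - lcons a r.
Proof. by rewrite lconsD lconsN. Qed.
Lemma lconsZ a (k : F) (p : V F) : lcons a (k *: p) = k *: lcons a p.
Proof. by apply/malgP => u; rewrite mcoeffZ !lconsE; case: u => [|c w]; rewrite ?mcoeffZ ?mulr0 // mulrCA. Qed.
Lemma lconsU a (w : word) : lcons a (<< w >> : V F) = << a :: w >>.
Proof.
apply/malgP => u; rewrite lconsE !mcoeffU; case: u => [|c v] //.
rewrite eqseq_cons eq_sym; case: (a == c); rewrite ?mul1r ?mul0r // mcoeffU. by [].
Qed.

Lemma qstarU (u v : word) : qstar q (<< u >> : V F) << v >> = wshuffle q u v.
Proof. by rewrite /qstar !msuppU oner_eq0 !big_seq_fset1 !mcoeffUU mulr1 scale1r. Qed.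

Lemma SE0 b : wshuffle q [:: b] [::] = << [:: b] >>. Proof. by []. Qed.
Lemma SEc b c v : wshuffle q [:: b] (c :: v) =
  << b :: c :: v >> + q ^ (bform b c) *: lcons c (wshuffle q [:: b] v).
Proof. by rewrite /= lconsU big_cons big_nil addr0. Qed.
Lemma TE0 b : wshuffle q [::] [:: b] = << [:: b] >>. Proof. by []. Qed.
Lemma TEc b c v : wshuffle q (c :: v) [:: b] =
  lcons c (wshuffle q v [:: b]) + q ^ (\sum_(x <- c :: v) bform x b) *: << b :: c :: v >>.
Proof. by rewrite /= lconsU. Qed.

Definition alt (a : bool) (n : nat) : word := mkseq (fun i => a (+) odd i) n.

Lemma altS a n : alt a n.+1 = a :: alt (~~ a) n.
Proof.
rewrite /alt /mkseq -add1n iotaD /= addbF; congr (_ :: _).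
rewrite (iotaDl 1 0 n) -map_comp; apply: eq_map => i /=.
by rewrite addbN addNb.
Qed.

Lemma altSS a n : alt a n.+2 = a :: ~~ a :: alt a n.
Proof. by rewrite !altS negbK. Qed.

Definition sumb (u : word) b : int := \sum_(c <- u) bform c b.

Lemma sumb_alt a n b : sumb (alt a n.*2) b = 0.
Proof.
elim: n => [|n IH]; first by rewrite /sumb big_nil.
rewrite doubleS altSS /sumb !big_cons -/(sumb _ _) IH addr0.
by case: a {IH}; case: b.
Qed.

Lemma bformN a : bform a (~~ a) = -2. Proof. by case: a. Qed.
Lemma bformNl a : bform (~~ a) a = -2. Proof. by case: a. Qed.
Lemma bformxx a : bform a a = 2. Proof. by case: a. Qed.
Lemma qz2 : q ^ (2 : int) = q ^+ 2. Proof. by []. Qed.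
Lemma qzm2 : q ^ (-2 : int) = q ^- 2. Proof. by []. Qed.
Lemma im2p2 : (-2 + 2 : int) = 0. Proof. by []. Qed.
Lemma ip2m2 : (2 + -2 : int) = 0. Proof. by []. Qed.
Lemma qz0 : q ^ (0 : int) = 1. Proof. by []. Qed.

Lemma solveY (Y Z A : F) : q != 0 -> q * Y - q^-1 * Z = A -> Y = q^-1 * (A + q^-1 * Z).
Proof. move=> q0 <-; field; exact: q0. Qed.

Lemma LB (q0 : q != 0) a n :
  q *: wshuffle q [:: ~~ a] (alt a n.*2) - q^-1 *: wshuffle q (alt a n.*2) [:: ~~ a]
  = (q - q^-1) *: << ~~ a :: alt a n.*2 >>.
Proof.
elim: n => [|n IH]; first by rewrite /= scalerBl.
rewrite doubleS altSS.
have sv := sumb_alt a n (~~ a); rewrite /sumb in sv.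
rewrite (SEc (~~ a) a) (SEc (~~ a) (~~ a)) (TEc (~~ a) a) (TEc (~~ a) (~~ a)).
rewrite !lconsD !lconsZ !lconsU !big_cons sv bformNl bformxx bformN !addr0.
rewrite im2p2 qz0 qz2 qzm2.
move: (wshuffle q [:: ~~ a] (alt a n.*2)) (wshuffle q (alt a n.*2) [:: ~~ a]) IH.
move: (alt a n.*2) => v S T IH.
move/(congr1 (lcons (~~ a)))/(congr1 (lcons a)): IH.
rewrite !(lconsB, lconsZ, lconsU, lconsD).
move: (lcons a (lcons (~~ a) S)) (lcons a (lcons (~~ a) T)) => S' T' IH'.
apply/malgP => u.
move/(congr1 (mcoeff u)): IH'; rewrite !(mcoeffD, mcoeffB, mcoeffZ, mcoeffN) => E.
rewrite (solveY _ _ _ q0 E).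
atomize; field; exact: q0.
Qed.
Lemma alt0 c : alt c 0 = [::]. Proof. by []. Qed.

Lemma solveY1 (Y Z A : F) : Y - Z = A -> Y = A + Z.
Proof. by move=> <-; rewrite subrK. Qed.

Lemma LA (q0 : q != 0) a n :
  wshuffle q [:: ~~ a] (alt a n.*2.+1) - wshuffle q (alt a n.*2.+1) [:: ~~ a]
  = (1 - q^-2) *: (<< alt (~~ a) n.*2.+2 >> - << alt a n.*2.+2 >>).
Proof.
elim: n => [|n IH].
  rewrite !altS !negbK !alt0 (SEc (~~ a) a) (TEc (~~ a) a) SE0 TE0 lconsU.
  rewrite !big_cons big_nil bformNl bformN !addr0 qzm2.
  apply/malgP => u; rewrite !(mcoeffD, mcoeffB, mcoeffZ, mcoeffN).
atomize; field; exact: q0.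
rewrite doubleS !altS !negbK in IH *.
have sv := sumb_alt (~~ a) n (~~ a); rewrite /sumb in sv.
rewrite (SEc (~~ a) a) (SEc (~~ a) (~~ a)) (TEc (~~ a) a) (TEc (~~ a) (~~ a)).
move: (wshuffle q [:: ~~ a] (a :: alt (~~ a) n.*2)) (wshuffle q (a :: alt (~~ a) n.*2) [:: ~~ a]) IH.
move=> S T IH.
rewrite !lconsD !lconsZ !lconsU !big_cons sv bformNl bformxx bformN !addr0.
rewrite ip2m2 qz0 qz2 qzm2.
move: (alt (~~ a) n.*2) (alt a n.*2) IH => w w' IH.
move/(congr1 (lcons (~~ a)))/(congr1 (lcons a)): IH.
rewrite !(lconsB, lconsZ, lconsU, lconsD).
move: (lcons a (lcons (~~ a) S)) (lcons a (lcons (~~ a) T)) => S' T' IH'.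
apply/malgP => u.
move/(congr1 (mcoeff u)): IH'; rewrite !(mcoeffD, mcoeffB, mcoeffZ, mcoeffN) => E.
rewrite (solveY1 _ _ _ E).
atomize; field; exact: q0.
Qed.

Lemma LC (q0 : q != 0) a n :
  q *: wshuffle q (alt a n.*2) [:: a] - q^-1 *: wshuffle q [:: a] (alt a n.*2)
  = (q - q^-1) *: << alt a n.*2.+1 >>.
Proof.
elim: n => [|n IH]; first by rewrite (altS a 0) /= scalerBl.
rewrite doubleS altSS (altSS a n.*2.+1).
have sv := sumb_alt a n a; rewrite /sumb in sv.
rewrite (SEc a a) (SEc a (~~ a)) (TEc a a) (TEc a (~~ a)).
move: (wshuffle q [:: a] (alt a n.*2)) (wshuffle q (alt a n.*2) [:: a]) IH => S T IH.
rewrite !lconsD !lconsZ !lconsU !big_cons sv bformNl bformxx bformN !addr0.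
rewrite ip2m2 qz0 qz2 qzm2.
move: (alt a n.*2) (alt a n.*2.+1) IH => w w' IH.
move/(congr1 (lcons (~~ a)))/(congr1 (lcons a)): IH.
rewrite !(lconsB, lconsZ, lconsU, lconsD).
move: (lcons a (lcons (~~ a) S)) (lcons a (lcons (~~ a) T)) => S' T' IH'.
apply/malgP => u.
move/(congr1 (mcoeff u)): IH'; rewrite !(mcoeffD, mcoeffB, mcoeffZ, mcoeffN) => E.
rewrite (solveY _ _ _ q0 E).
atomize; field; exact: q0.
Qed.
End S.

Theorem proposition5p7 (F : fieldType) (q : F)
  (q_neq0 : q != 0) (q_not_root : forall n : nat, (0 < n)%N -> q ^+ n != 1)
  (k : nat) :
  qcomm q (Wneg F 0) (Wpos F k) = (1 - q ^- 2) *: (Gtw F k.+1 - Gw F k.+1)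
   /\ qcomm q (Wneg F k) (Wpos F 0) = (1 - q ^- 2) *: (Gtw F k.+1 - Gw F k.+1)
   /\ qqcomm q (Wneg F 0) (Gw F k.+1) = (q - q^-1) *: Wneg F k.+1
   /\ qqcomm q (Gtw F k.+1) (Wneg F 0) = (q - q^-1) *: Wneg F k.+1
   /\ qqcomm q (Gw F k.+1) (Wpos F 0) = (q - q^-1) *: Wpos F k.+1
   /\ qqcomm q (Wpos F 0) (Gtw F k.+1) = (q - q^-1) *: Wpos F k.+1.
Proof.
rewrite /qcomm /qqcomm /Wneg /Wpos /Gw /Gtw !qstarU.
split.
  change (wshuffle q [:: ~~ false] (alt false k.*2.+1) - wshuffle q (alt false k.*2.+1) [:: ~~ false]
    = (1 - q ^- 2) *: (<< alt (~~ false) k.*2.+2 >> - << alt false k.*2.+2 >>)).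
  exact: LA.
split.
  change (wshuffle q (alt true k.*2.+1) [:: ~~ true] - wshuffle q [:: ~~ true] (alt true k.*2.+1)
    = (1 - q ^- 2) *: (<< alt true k.*2.+2 >> - << alt (~~ true) k.*2.+2 >>)).
  by rewrite -opprB LA // -scalerN opprB.
split.
  change (q *: wshuffle q [:: ~~ false] (alt false (k.+1).*2) - q^-1 *: wshuffle q (alt false (k.+1).*2) [:: ~~ false]
    = (q - q^-1) *: << alt true (k.+1).*2.+1 >>).
  by rewrite LB // altS.
split.
  change (q *: wshuffle q (alt true (k.+1).*2) [:: true] - q^-1 *: wshuffle q [:: true] (alt true (k.+1).*2)
    = (q - q^-1) *: << alt true (k.+1).*2.+1 >>).
  exact: LC.
split.
  change (q *: wshuffle q (alt false (k.+1).*2) [:: false] - q^-1 *: wshuffle q [:: false] (alt false (k.+1).*2)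
    = (q - q^-1) *: << alt false (k.+1).*2.+1 >>).
  exact: LC.
change (q *: wshuffle q [:: ~~ true] (alt true (k.+1).*2) - q^-1 *: wshuffle q (alt true (k.+1).*2) [:: ~~ true]
  = (q - q^-1) *: << alt false (k.+1).*2.+1 >>).
by rewrite LB // altS.
Qed.
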